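(* Let $A=\mathbb{Z}_2^n\times A_{2'}$, where $n\ge 1$ and $A_{2'}$ is a finite abelian group of odd order. Then a subgroup $H$ of $A$ is a subgroup perfect code of $A$ if and only if either $|H|$ is even or $H=\{0\}\times A_{2'}$.
   Context: Groups are written additively with identity $0$. An element $x\in A$ is a square if $x=2y$ for some $y\in A$; a subset is square-free if it contains no squares. For a square-free $T\subseteq A$, the Cayley sum graph $\mathrm{CayS}(A,T)$ is the simple graph with vertex set $A$ in which distinct $x,y$ are adjacent iff $x+y\in T$. A subset $C$ of the vertex set of a graph is a perfect code if every vertex is at distance at most one from exactly one vertex of $C$. A subgroup $H$ of $A$ is a subgroup perfect code of $A$ if $H$ is a perfect code of $\mathrm{CayS}(A,T)$ for some square-free $T\subseteq A$ (the empty set allowed). *)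

(* Defs.v *)
From HB Require Import structures.
From mathcomp Require Import all_boot all_order all_algebra.
Set Implicit Arguments. Unset Strict Implicit. Unset Printing Implicit Defensive.
Import GRing.Theory.
Local Open Scope ring_scope.

Section CayleySum.
Variable A : finZmodType.

Definition is_square (x : A) : bool := [exists y : A, x == y *+ 2].

Definition square_free (T : {set A}) : bool := [forall x in T, ~~ is_square x].

Definition cays_adj (T : {set A}) (x y : A) : bool := (x != y) && (x + y \in T).

Definition perfect_code (e : A -> A -> bool) (C : {set A}) : bool :=
  [forall v : A, #|[set c in C | (c == v) || e v c]| == 1%N].

Definition is_subgroup (H : {set A}) : bool :=
  (0 \in H) && [forall x in H, forall y in H, x - y \in H].

Definition subgroup_perfect_code (H : {set A}) : Prop :=
  exists T : {set A}, square_free T /\ perfect_code (cays_adj T) H.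
End CayleySum.

Definition Z2n_times (n : nat) (B : finZmodType) : Type := ('rV['Z_2]_n * B)%type.
HB.instance Definition _ n B := GRing.Zmodule.on (Z2n_times n B).
HB.instance Definition _ n B := Finite.on (Z2n_times n B).

(* Main.v *)
Require Import Defs.
From HB Require Import structures.
From mathcomp Require Import all_boot all_order all_algebra all_fingroup all_solvable zify.
Import GRing.Theory.
Local Open Scope ring_scope.

Section S.
Variables (n : nat) (B : finZmodType).
Local Notation A := (Z2n_times n B).

Lemma addpE (x y : A) : x + y = (x.1 + y.1, x.2 + y.2).
Proof. by case: x; case: y. Qed.

Lemma fst_muln (x : A) k : (x *+ k).1 = x.1 *+ k.
Proof. elim: k => [|k IH] //; by rewrite !mulrS /= -IH. Qed.
Lemma snd_muln (x : A) k : (x *+ k).2 = x.2 *+ k.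
Proof. elim: k => [|k IH] //; by rewrite !mulrS /= -IH. Qed.

Lemma v2 (v : 'rV['Z_2]_n) : v *+ 2 = 0.
Proof.
apply/rowP => j; rewrite mulr2n !mxE.
by case: (v 0 j) => [[|[|m]] //] ?; apply/val_inj.
Qed.

Lemma vodd (v : 'rV['Z_2]_n) k : odd k -> v *+ k = v.
Proof.
move=> ok; rewrite -[k]odd_double_half ok mulrnDr -muln2 mulrnA v2 addr0.
by [].
Qed.

Lemma cardB0 (b : B) : b *+ #|B| = 0.
Proof.
have := @expg_cardG _ [set: B]%G b (in_setT b).
by rewrite cardsT.
Qed.

Hypothesis oB : odd #|B|.

Lemma halfB (b : B) : (b *+ (#|B|./2.+1)) *+ 2 = b.
Proof.
have e : (#|B|./2.+1 * 2 = #|B| + 1)%N.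
  by rewrite -{2}[#|B|]odd_double_half oB -muln2; lia.
by rewrite -mulrnA e mulrnDr cardB0 add0r.
Qed.

Lemma dblB (b : B) : b *+ 2 = 0 -> b = 0.
Proof. by move=> h; rewrite -(halfB b) -mulrnAC h mul0rn. Qed.

Lemma sqE (x : A) : is_square x = (x.1 == 0).
Proof.
apply/existsP/eqP => [[y /eqP ->]|h].
  by rewrite fst_muln v2.
exists (0, x.2 *+ (#|B|./2.+1)); apply/eqP.
case: x h => a b /= ->.
by rewrite [RHS]mulr2n addpE /= addr0 -mulr2n halfB.
Qed.


Section Sub.
Variable H : {set A}.
Hypothesis sH : is_subgroup H.

Lemma H0 : 0 \in H. Proof. by case/andP: sH. Qed.
Lemma HB x y : x \in H -> y \in H -> x - y \in H.
Proof. by case/andP: sH => _ /forallP/(_ x)/implyP h xH yH; move/forall_inP: (h xH); apply. Qed.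
Lemma HN y : y \in H -> - y \in H.
Proof. by move=> yH; rewrite -sub0r HB // H0. Qed.
Lemma HD x y : x \in H -> y \in H -> x + y \in H.
Proof. by move=> xH yH; rewrite -[y]opprK HB // HN. Qed.

Lemma gH : group_set H.
Proof. apply/group_setP; split; first exact: H0. by move=> x y; apply: HD. Qed.

Definition HG := Group gH.

Lemma oddH_sub : odd #|H| -> forall h, h \in H -> h.1 = 0.
Proof.
move=> oH h hH.
have := @expg_cardG _ HG h hH.
move=> e; have e' : h *+ #|H| = 0 := e.
move: (congr1 fst e').
by rewrite fst_muln vodd.
Qed.

Lemma evenH : ~~ odd #|H| -> exists2 h, h \in H & h.1 != 0.
Proof.
move=> eH; case: (boolP [exists x in H, x.1 != 0]) => [/exists_inP //|/exists_inPn hn]; exfalso.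
have d2 : (2 %| #|HG|)%N by rewrite dvdn2.
have [x xH ox] := @Cauchy _ 2 HG isT d2.
have x2 : x *+ 2 = 0 by have := expg_order x; rewrite ox; apply.
have x1 : x.1 = 0 by apply/eqP; move: (hn x xH); rewrite negbK.
have x20 : x.2 = 0 by apply: dblB; rewrite -snd_muln x2.
have : x = 0 by case: x x1 x20 {xH ox x2} => a b /= -> ->.
by move=> x0; move: ox; rewrite x0 order1.
Qed.


Definition Q (t : A) := [set x : A | (x - t \in H) && (x.1 != 0)].
Definition TT := [set t : A | (t \notin H) && (t.1 != 0) && ([pick x in Q t] == Some t)].

Lemma QE t v : t - v \in H -> Q t = Q v.
Proof.
move=> tv; apply/setP => x; rewrite !inE.
case: (boolP (x - v \in H)) => xv.
  have -> : x - t = (x - v) - (t - v) by rewrite opprB addrA subrK.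
  by rewrite HB.
case: (boolP (x - t \in H)) => // xt; case/negP: xv.
have -> : x - v = (x - t) + (t - v) by rewrite addrA subrK.
by rewrite HD.
Qed.

Lemma construct : (forall v, v \notin H -> exists x, (x - v \in H) && (x.1 != 0)) ->
  subgroup_perfect_code H.
Proof.
move=> cov; exists TT; split.
  apply/forall_inP => t; rewrite !inE sqE => /andP[/andP[_ ->] _] //.
apply/forallP => v; rewrite /cays_adj.
case: (boolP (v \in H)) => vH.
  rewrite (_ : [set c in H | _] = [set v]) ?cards1 //.
  apply/setP => c; rewrite !inE.
  case: (eqVneq c v) => [->|cv]; first by rewrite vH.
  by case cH: (c \in H) => //=; rewrite HD.
have [x /andP[xv x1]] := cov v vH.
have [p pQ E] : exists2 p, p \in Q v & [pick y in Q v] = Some p.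
  case: pickP => [p pp|none]; first by exists p.
  by move: (none x); rewrite inE xv x1.
move: (pQ); rewrite inE => /andP[pv p1].
rewrite (_ : [set c in H | _] = [set p - v]) ?cards1 //.
apply/setP => c; rewrite !inE.
case: (boolP (c \in H)) => cH /=; last first.
  by symmetry; apply/negP => /eqP e; move: cH; rewrite e pv.
have cv : (c == v) = false by apply/negP => /eqP e; move: vH; rewrite -e cH.
have vc : (v != c) by rewrite eq_sym cv.
rewrite cv vc /=.
rewrite (@QE (v + c) v); last by rewrite addrC addKr.
rewrite E; apply/idP/eqP.
  by case/andP => _ /eqP [->]; rewrite addrC addKr.
move=> ce; subst c.
have e2 : v + (p - v) = p by rewrite addrC subrK.
rewrite -[v.1 + _]/((v + (p - v)).1) e2 p1 eqxx andbT.
rewrite andbT; apply: contra vH => pH.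
have <- : p - (p - v) = v by rewrite opprB addrC subrK.
by rewrite HB.
Qed.
End Sub.
End S.

Theorem proposition3p10 (n : nat) (B : finZmodType)
    (H : {set Z2n_times n B}) :
  (1 <= n)%N -> odd #|B| -> is_subgroup H ->
  (subgroup_perfect_code H <->
   ~~ odd #|H| \/ H = [set x : Z2n_times n B | x.1 == 0]).
Proof.
move=> n1 oB sH; split.
  case=> T [sf pc]; case: (boolP (odd #|H|)) => oH; last by left.
  right; have sub := @oddH_sub _ _ _ sH oH.
  apply/setP => v; rewrite inE; apply/idP/eqP => [vH|v1]; first exact: sub.
  apply/negPn/negP => vH; move/forallP: pc => /(_ v) /eqP c1.
  have [c] : exists c, c \in [set c in H | (c == v) || cays_adj T v c].
    by apply/set0Pn; rewrite -card_gt0 c1.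
  rewrite inE => /andP[cH /orP[/eqP cv|/andP[vc vcT]]].
    by move: vH; rewrite -cv cH.
  move/forall_inP: sf => /(_ _ vcT); rewrite sqE //.
  by rewrite -[(v + c).1]/(v.1 + c.1) v1 (sub c cH) addr0 eqxx.
case=> [eH|HS].
  apply: (@construct _ _ oB _ sH) => v vH.
  have [h hH h1] := @evenH _ _ oB _ sH eH.
  case: (eqVneq v.1 0) => v1.
    exists (v + h); rewrite addrC addKr hH /=.
    by rewrite v1 add0r.
  by exists v; rewrite subrr H0.
apply: (@construct _ _ oB _ sH) => v vH; exists v; rewrite subrr H0 //=.
by move: vH; rewrite HS inE.
Qed.
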